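(* Let $R$ be an order in a quadratic number field. Then $R$ is super-multiplicative: for every pair of non-zero ideals $I,J$ of $R$ one has $N(IJ)\geq N(I)N(J)$.
   Context: An order in a number field $K$ is a subring of $K$ with fraction field $K$ whose additive group is finitely generated; a quadratic number field is a number field of degree $2$ over $\mathbb{Q}$. For a non-zero ideal $I$ of $R$, $N(I)=[R:I]$ is its index as an additive subgroup. A ring is super-multiplicative if for all ideals $I,J$ with $[R:IJ]$ finite one has $N(IJ)\geq N(I)N(J)$. *)

(* Defs.v *)
(* A number field is modelled as a finite-dimensional field
   extension L of rat (fieldExtType rat); quadratic means \dim {:L} = 2. *)
From HB Require Import structures.
From mathcomp Require Import all_boot all_order all_algebra all_field.
Set Implicit Arguments. Unset Strict Implicit. Unset Printing Implicit Defensive.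
Import Order.TTheory GRing.Theory Num.Theory.
Local Open Scope ring_scope.

Section Orders.
Variable L : fieldExtType rat.

Definition is_subring (R : L -> Prop) : Prop :=
  [/\ R 1,
      (forall x y, R x -> R y -> R (x - y)) &
      (forall x y, R x -> R y -> R (x * y))].

Definition add_fin_gen (R : L -> Prop) : Prop :=
  exists (n : nat) (g : 'I_n -> L),
    (forall i, R (g i)) /\
    (forall x, R x <-> exists c : 'I_n -> int, x = \sum_(i < n) g i *~ c i).

Definition frac_field_is_L (R : L -> Prop) : Prop :=
  forall x : L, exists a b, [/\ R a, R b, b != 0 & x = a / b].

Definition is_order (R : L -> Prop) : Prop :=
  [/\ is_subring R, add_fin_gen R & frac_field_is_L R].

Definition is_ideal (R I : L -> Prop) : Prop :=
  [/\ (forall x, I x -> R x), I 0,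
      (forall x y, I x -> I y -> I (x + y)) &
      (forall r x, R r -> I x -> I (r * x))].

Definition nonzero_ideal (I : L -> Prop) : Prop := exists x, I x /\ x != 0.

Definition ideal_mul (I J : L -> Prop) : L -> Prop :=
  fun x => exists (n : nat) (a b : 'I_n -> L),
    (forall i, I (a i) /\ J (b i)) /\ x = \sum_(i < n) a i * b i.

(* [R : I] = n as additive groups: r_0..r_{n-1} in R form a complete,
   irredundant system of representatives of R/I. *)
Definition has_index (R I : L -> Prop) (n : nat) : Prop :=
  exists r : 'I_n -> L,
    (forall i, R (r i)) /\
    (forall x, R x -> exists! i, I (x - r i)).

End Orders.

(* Main.v *)
Require Import Defs.
From HB Require Import structures.
From mathcomp Require Import all_boot all_order all_algebra all_field.
Import Order.TTheory GRing.Theory Num.Theory.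
From mathcomp Require Import zify ring lra.
From Stdlib Require Import Classical.
Local Open Scope ring_scope.
Set Implicit Arguments. Unset Strict Implicit.



Lemma ex_min_nat (Q : nat -> Prop) :
  (exists n, Q n) -> exists n, Q n /\ forall m, Q m -> (n <= m)%N.
Proof.
move=> [n Qn]; elim: n {-2}n (leqnn n) Qn => [|k IH] n hn Qn.
  exists n; split=> // m _; by move: hn; rewrite leqn0 => /eqP ->.
case: (classic (exists m, (m < n)%N /\ Q m)) => [[m [hm Qm]]|H].
  by apply: (IH m) => //; lia.
exists n; split=> // m Qm; rewrite leqNgt; apply/negP => hm; apply: H.
by exists m.
Qed.

Lemma int_subgroup_gen (P : int -> Prop) :
  (forall x y, P x -> P y -> P (x - y)) -> forall x0, P x0 -> x0 != 0 ->
  exists d : nat, [/\ (0 < d)%N, P d%:Z & forall x, P x -> exists q, x = q * d%:Z].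
Proof.
move=> Psub x0 Px0 nx0.
have P0 : P 0 by rewrite -(subrr x0); apply: Psub.
have PN x : P x -> P (- x) by move=> Px; rewrite -sub0r; apply: Psub.
have PD x y : P x -> P y -> P (x + y).
  by move=> Px Py; rewrite -(opprK y); apply: Psub => //; apply: PN.
have Pabs : P (`|x0|%N)%:Z.
  have [->|->] : (`|x0|%N)%:Z = x0 \/ (`|x0|%N)%:Z = - x0 by lia.
    by [].
  by apply: PN.
have [d [[d0 Pd] dmin]] : exists d, ((0 < d)%N /\ P d%:Z) /\
    forall m, (0 < m)%N /\ P m%:Z -> (d <= m)%N.
  by apply: ex_min_nat; exists `|x0|%N; split => //; lia.
have Pmul : forall q, P (q * d%:Z).
  have Pn : forall k : nat, P (k%:Z * d%:Z).
    elim=> [|k IHk]; first by rewrite mul0r.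
    have -> : (k.+1)%:Z * d%:Z = k%:Z * d%:Z + d%:Z by rewrite intS; ring.
    by apply: PD.
  case=> k; first exact: Pn.
  by rewrite NegzE mulNr; apply: PN; apply: Pn.
exists d; split => // x Px.
have Pr : P (x %% d%:Z)%Z.
  have -> : (x %% d%:Z)%Z = x - (x %/ d%:Z)%Z * d%:Z by lia.
  by apply: Psub.
exists (x %/ d%:Z)%Z.
case: (boolP ((x %% d%:Z)%Z == 0)) => [/eqP h|h]; first by lia.
have := dmin `|(x %% d%:Z)%Z|%N; have -> : (`|(x %% d%:Z)%Z|%N)%:Z = (x %% d%:Z)%Z by lia.
move=> /(_ (conj _ Pr)) H; exfalso.
have : (0 < `|(x %% d%:Z)%Z|)%N by lia.
move=> /H; lia.
Qed.

Definition span4 (s t A B C A' B' C' p q : int) := exists n1 n2 n3 n4 : int,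
 p = n1 * (A*A') + n2 * (A*B') + n3*(B*A') + n4*(B*B' + C*C'*t) /\
 q = n1 * 0 + n2 * (A*C') + n3*(C*A') + n4*(B*C' + C*B' + C*C'*s).

Lemma span4_det s t (A B C A' B' C' p q p' q' D : int) w12 w13 w14 w23 w24 w34 :
  (A*A') * (A*C') - 0 * (A*B') = w12 * D ->
  (A*A') * (C*A') - 0 * (B*A') = w13 * D ->
  (A*A') * (B*C' + C*B' + C*C'*s) - 0 * (B*B' + C*C'*t) = w14 * D ->
  (A*B') * (C*A') - (A*C') * (B*A') = w23 * D ->
  (A*B') * (B*C' + C*B' + C*C'*s) - (A*C') * (B*B' + C*C'*t) = w24 * D ->
  (B*A') * (B*C' + C*B' + C*C'*s) - (C*A') * (B*B' + C*C'*t) = w34 * D ->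
  span4 s t A B C A' B' C' p q -> span4 s t A B C A' B' C' p' q' ->
  exists W, p * q' - q * p' = W * D.
Proof.
move=> h12 h13 h14 h23 h24 h34 [n1 [n2 [n3 [n4 [e1 e2]]]]] [m1 [m2 [m3 [m4 [f1 f2]]]]].
exists ((n1* m2 - n2* m1) * w12 + (n1* m3 - n3* m1) * w13 + (n1* m4 - n4* m1) * w14
  + (n2* m3 - n3* m2) * w23 + (n2* m4 - n4* m2) * w24 + (n3* m4 - n4* m3) * w34).
rewrite e1 e2 f1 f2.
transitivity ((n1* m2 - n2* m1) * ((A*A') * (A*C') - 0 * (A*B'))
  + (n1* m3 - n3* m1) * ((A*A') * (C*A') - 0 * (B*A'))
  + (n1* m4 - n4* m1) * ((A*A') * (B*C' + C*B' + C*C'*s) - 0 * (B*B' + C*C'*t))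
  + (n2* m3 - n3* m2) * ((A*B') * (C*A') - (A*C') * (B*A'))
  + (n2* m4 - n4* m2) * ((A*B') * (B*C' + C*B' + C*C'*s) - (A*C') * (B*B' + C*C'*t))
  + (n3* m4 - n4* m3) * ((B*A') * (B*C' + C*B' + C*C'*s) - (C*A') * (B*B' + C*C'*t))).
  ring.
rewrite h12 h13 h14 h23 h24 h34; ring.
Qed.

Section Core.
Variable L : fieldExtType rat.
Variable w : L.
Variables s t : int.
Hypothesis w2 : w ^+ 2 = s%:~R * w + t%:~R.
Hypothesis indep : forall u v : int, u%:~R + v%:~R * w = 0 :> L -> u = 0 /\ v = 0.
Variable R : L -> Prop.
Hypothesis HR : forall x, R x <-> exists u v : int, x = u%:~R + v%:~R * w.

Definition emb (u v : int) : L := u%:~R + v%:~R * w.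

Lemma embD u v u' v' : emb u v + emb u' v' = emb (u + u') (v + v').
Proof. rewrite /emb !intrD; ring. Qed.

Lemma embB u v u' v' : emb u v - emb u' v' = emb (u - u') (v - v').
Proof. rewrite /emb !intrB; ring. Qed.

Lemma embZ k u v : emb k 0 * emb u v = emb (k * u) (k * v).
Proof. rewrite /emb !intrM; ring. Qed.

Lemma embM u v u' v' :
  emb u v * emb u' v' = emb (u * u' + v * v' * t) (u * v' + v * u' + v * v' * s).
Proof.
apply/eqP; rewrite -subr_eq0.
have -> : emb u v * emb u' v' - emb (u * u' + v * v' * t) (u * v' + v * u' + v * v' * s)
   = (v * v')%:~R * (w ^+ 2 - (s%:~R * w + t%:~R)).
  rewrite /emb !intrD !intrM; ring.
by rewrite w2 subrr mulr0.
Qed.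

Lemma emb00 : emb 0 0 = 0. Proof. by rewrite /emb !mul0r addr0. Qed.
Lemma emb10 : emb 1 0 = 1. Proof. by rewrite /emb mul0r addr0. Qed.

Lemma emb_inj u v u' v' : emb u v = emb u' v' -> u = u' /\ v = v'.
Proof.
move=> /eqP; rewrite -subr_eq0 embB => /eqP /indep [] /eqP; rewrite subr_eq0 => /eqP ->.
by move=> /eqP; rewrite subr_eq0 => /eqP ->.
Qed.

Lemma emb_eq0 u v : emb u v = 0 -> u = 0 /\ v = 0.
Proof. by rewrite -emb00 => /emb_inj. Qed.

Lemma Remb u v : R (emb u v). Proof. by apply/HR; exists u, v. Qed.

Lemma Rinv x : R x -> exists u v, x = emb u v.
Proof. by move/HR. Qed.

Section Ideal.
Variable I : L -> Prop.
Hypothesis HI : is_ideal R I.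

Lemma I0 : I 0. Proof. by case: HI. Qed.
Lemma IR x : I x -> R x. Proof. by case: HI => H _ _ _; apply: H. Qed.
Lemma ID x y : I x -> I y -> I (x + y). Proof. by case: HI => _ _ H _; apply: H. Qed.
Lemma IM r x : R r -> I x -> I (r * x). Proof. by case: HI => _ _ _ H; apply: H. Qed.
Lemma IZ k u v : I (emb u v) -> I (emb (k * u) (k * v)).
Proof. by move=> h; rewrite -embZ; apply: IM => //; apply: Remb. Qed.
Lemma IB u v u' v' : I (emb u v) -> I (emb u' v') -> I (emb (u - u') (v - v')).
Proof.
move=> h1 h2; rewrite -embB -[_ - _]/(_ + _); apply: ID => //.
have -> : - emb u' v' = emb ((-1) * u') ((-1) * v') by rewrite -embZ /emb; ring.
exact: IZ.
Qed.
Lemma Icomb i j u v u' v' : I (emb u v) -> I (emb u' v') ->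
  I (emb (i * u + j * u') (i * v + j * v')).
Proof. by move=> h1 h2; rewrite -embD; apply: ID; apply: IZ. Qed.

Lemma ideal_struct : nonzero_ideal I ->
  exists (A C : nat) (a b c : int), [/\ (0 < A)%N, (0 < C)%N & A%:Z = a * C%:Z] /\ [/\
    I (emb A 0), I (emb (b * C%:Z) C),
    (forall u v, I (emb u v) -> exists i j, u = i * A%:Z + j * (b * C%:Z) /\ v = j * C%:Z) &
    t = b ^+ 2 + b * s - a * c].
Proof.
move=> [x [Ix nx]].
have [u [v xe]] := Rinv (IR Ix).
pose N := u * u + u * v * s - v * v * t.
have E : emb (u + v * s) (- v) * emb u v = emb N 0.
  by rewrite embM; congr emb; rewrite /N; ring.
have IN : I (emb N 0).
  rewrite -E.
  by apply: IM; [apply: Remb | rewrite -xe].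
have N0 : N != 0.
  apply/eqP => N0; move: E; rewrite N0 emb00.
  move/eqP; rewrite mulf_eq0 => /orP [/eqP /emb_eq0 [h1 h2]|/eqP h].
    have v0 : v = 0 by lia.
    have u0 : u = 0 by lia.
    by move: nx; rewrite xe u0 v0 emb00 eqxx.
  by move: nx; rewrite xe h eqxx.
have [A [A0 IA Agen]] := @int_subgroup_gen (fun a => I (emb a 0))
   (fun x y h1 h2 => ltac:(by have := IB h1 h2; rewrite subrr)) _ IN N0.
have PVA : exists u, I (emb u A%:Z).
  exists 0; have -> : emb 0 A%:Z = emb 0 1 * emb A%:Z 0.
    by rewrite embM; congr emb; ring.
  by apply: IM => //; apply: Remb.
have [C [C0 [B IB0] Cgen]] := @int_subgroup_gen (fun v => exists u, I (emb u v))
   (fun x y h1 h2 => ltac:(by case: h1 => u1 h1; case: h2 => u2 h2; exists (u1 - u2); apply: IB))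
   _ PVA ltac:(by rewrite eqz_nat -lt0n).
have span : forall u v, I (emb u v) -> exists i j, u = i * A%:Z + j * B /\ v = j * C%:Z.
  move=> u1 v1 h; have [j vj] := Cgen v1 (ex_intro _ u1 h).
  have : I (emb (u1 - j * B) 0).
    have := IB h (IZ j IB0); by rewrite vj subrr.
  move/Agen => [i ie]; exists i, j; split => //; lia.
have [a Aa] := Cgen A PVA.
have Iw : I (emb (C%:Z * t) (B + C%:Z * s)).
  have -> : emb (C%:Z * t) (B + C%:Z * s) = emb 0 1 * emb B C%:Z.
    by rewrite embM; congr emb; ring.
  by apply: IM => //; apply: Remb.
have [i [j [e1 e2]]] := span _ _ Iw.
exists A, C, a, (j - s), (- i).
have Be : B = (j - s) * C%:Z by lia.
have C0' : C%:Z != 0 by rewrite eqz_nat -lt0n.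
have te : t = i * a + j * (j - s).
  apply/eqP; rewrite -subr_eq0; apply/eqP.
  have : C%:Z * (t - (i * a + j * (j - s))) = 0.
    have -> : C%:Z * (t - (i * a + j * (j - s))) = C%:Z * t - i * (a * C%:Z) - j * ((j - s) * C%:Z) by ring.
    by rewrite -Aa -Be e1; ring.
  by move/eqP; rewrite mulf_eq0 (negPf C0') /= => /eqP.
split; split => //; first by rewrite -Be.
  by move=> u1 v1 /span; rewrite Be.
by rewrite te; ring.
Qed.


Lemma ideal_index (A C : nat) (B : int) : (0 < A)%N -> (0 < C)%N ->
  I (emb A 0) -> I (emb B C) ->
  (forall u v, I (emb u v) -> exists i j, u = i * A%:Z + j * B /\ v = j * C%:Z) ->
  has_index R I (A * C).
Proof.
move=> A0 C0 IA IBC span.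
pose r := fun k : 'I_(A * C) => emb (k %% A)%N (k %/ A)%N.
have rlt : forall k : 'I_(A * C), (k %/ A < C)%N.
  by move=> [k hk]; rewrite ltn_divLR //=; lia.
have uniq : forall u v (k1 k2 : 'I_(A * C)), I (emb u v - r k1) -> I (emb u v - r k2) -> k1 = k2.
  move=> u v k1 k2; rewrite /r !embB => h1 h2.
  have [i [j [e1 e2]]] := span _ _ (IB h1 h2).
  have lt1 := rlt k1; have lt2 := rlt k2.
  have lm1 : (k1 %% A < A)%N by rewrite ltn_mod.
  have lm2 : (k2 %% A < A)%N by rewrite ltn_mod.
  have [eq1 eq2] : (k1 %/ A = k2 %/ A)%N /\ (k1 %% A = k2 %% A)%N.
    move: e1 e2 lt1 lt2 lm1 lm2; move: (k1 %/ A)%N (k2 %/ A)%N (k1 %% A)%N (k2 %% A)%N.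
    move=> d1 d2 r1 r2 e1 e2 lt1 lt2 lm1 lm2.
    have j0 : j = 0 by nia.
    rewrite j0 in e1 e2.
    have i0 : i = 0 by nia.
    rewrite i0 in e1; lia.
  by apply: val_inj => /=; rewrite (divn_eq k1 A) (divn_eq k2 A) eq1 eq2.
exists r; split; first by move=> k; apply: Remb.
move=> x /Rinv [u [v ->]].
have [j [q [vE j0 jC]]] : exists j q, [/\ v = q * C%:Z + j, 0 <= j & j < C%:Z].
  have Cn0 : C%:Z != 0 by lia.
  exists (v %% C%:Z)%Z, (v %/ C%:Z)%Z; split; first exact: divz_eq.
    exact: modz_ge0.
  by have := ltz_mod v Cn0; rewrite ger0_norm.
have [i [p [uE i0 iA]]] : exists i p, [/\ u - q * B = p * A%:Z + i, 0 <= i & i < A%:Z].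
  have An0 : A%:Z != 0 by lia.
  exists ((u - q * B) %% A%:Z)%Z, ((u - q * B) %/ A%:Z)%Z; split; first exact: divz_eq.
    exact: modz_ge0.
  by have := ltz_mod (u - q * B) An0; rewrite ger0_norm.
have ja : (`|j| < C)%N by lia.
have ia : (`|i| < A)%N by lia.
have klt : (`|j|%N * A + `|i|%N < A * C)%N by nia.
suff Hk : I (emb u v - r (Ordinal klt)).
  by exists (Ordinal klt); split => // k' hk'; apply: (uniq u v).
have km : (Ordinal klt %% A)%N = `|i|%N by rewrite /= modnMDl modn_small.
have kd : (Ordinal klt %/ A)%N = `|j|%N by rewrite /= divnMDl // divn_small // addn0.
rewrite /r km kd.
have -> : emb u v - emb `|i|%N `|j|%N = emb (p * A%:Z + q * B) (p * 0 + q * C%:Z).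
  by rewrite embB; congr emb; lia.
exact: Icomb.
Qed.

End Ideal.

Lemma Radd x y : R x -> R y -> R (x + y).
Proof. by move=> /Rinv [u [v ->]] /Rinv [u' [v' ->]]; rewrite embD; apply: Remb. Qed.
Lemma Rmul x y : R x -> R y -> R (x * y).
Proof. by move=> /Rinv [u [v ->]] /Rinv [u' [v' ->]]; rewrite embM; apply: Remb. Qed.
Lemma R0 : R 0. Proof. by rewrite -emb00; apply: Remb. Qed.

Lemma split_l m n (i : 'I_m) : split (lshift n i) = inl i.
Proof. exact: (unsplitK (inl _ i)). Qed.
Lemma split_r m n (i : 'I_n) : split (rshift m i) = inr i.
Proof. exact: (unsplitK (inr _ i)). Qed.

Section Prod.
Variables I J : L -> Prop.
Hypothesis HI : is_ideal R I.
Hypothesis HJ : is_ideal R J.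

Lemma mul_ideal : is_ideal R (ideal_mul I J).
Proof.
split.
- move=> x [n [a [b [hab ->]]]]; apply: (big_ind R) => //; first exact: R0.
    exact: Radd.
  by move=> i _; case: (hab i) => ha hb; apply: Rmul; [apply: (IR HI) | apply: (IR HJ)].
- exists 0%N, (fun _ => 0), (fun _ => 0); split; first by case.
  by rewrite big_ord0.
- move=> x y [n1 [a1 [b1 [h1 ->]]]] [n2 [a2 [b2 [h2 ->]]]].
  exists (n1 + n2)%N, (fun i => match split i with inl k => a1 k | inr k => a2 k end),
    (fun i => match split i with inl k => b1 k | inr k => b2 k end); split.
    by move=> i; case: (split i).
  by rewrite big_split_ord /=; congr (_ + _); apply: eq_bigr => i _;
    rewrite ?split_l ?split_r.
- move=> r x hr [n [a [b [hab ->]]]].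
  exists n, (fun i => r * a i), b; split.
    by move=> i; case: (hab i) => ha hb; split => //; apply: (IM HI).
  by rewrite mulr_sumr; apply: eq_bigr => i _; rewrite mulrA.
Qed.

Lemma mul_nonzero : nonzero_ideal I -> nonzero_ideal J -> nonzero_ideal (ideal_mul I J).
Proof.
move=> [x [Ix nx]] [y [Jy ny]]; exists (x * y); split; last by rewrite mulf_neq0.
exists 1%N, (fun _ => x), (fun _ => y); split => //.
by rewrite big_ord1.
Qed.

Lemma prod_span (A B C A' B' C' : int) :
  (forall u v, I (emb u v) -> exists i j, u = i * A + j * B /\ v = j * C) ->
  (forall u v, J (emb u v) -> exists i j, u = i * A' + j * B' /\ v = j * C') ->
  forall x, ideal_mul I J x -> exists p q, x = emb p q /\ span4 s t A B C A' B' C' p q.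
Proof.
move=> spI spJ x [n [a [b [hab ->]]]].
apply: (big_ind (fun y => exists p q, y = emb p q /\ span4 s t A B C A' B' C' p q)).
- by exists 0, 0; split; [rewrite emb00 | exists 0, 0, 0, 0; split; ring].
- move=> y1 y2 [p1 [q1 [-> [n1 [n2 [n3 [n4 [e1 e2]]]]]]]] [p2 [q2 [-> [m1 [m2 [m3 [m4 [f1 f2]]]]]]]].
  exists (p1 + p2), (q1 + q2); split; first by rewrite embD.
  exists (n1 + m1), (n2 + m2), (n3 + m3), (n4 + m4); rewrite e1 e2 f1 f2; split; ring.
- move=> k _; case: (hab k) => ha hb.
  have [u [v eu]] := Rinv (IR HI ha); have [u' [v' ev]] := Rinv (IR HJ hb).
  rewrite eu in ha; rewrite ev in hb.
  have [i [j [e1 e2]]] := spI _ _ ha; have [i' [j' [f1 f2]]] := spJ _ _ hb.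
  rewrite eu ev embM; do 2 eexists; split; first by reflexivity.
  exists (i * i'), (i * j'), (j * i'), (j * j'); rewrite e1 e2 f1 f2; split; ring.
Qed.

End Prod.

Lemma core_main I J : is_ideal R I -> is_ideal R J -> nonzero_ideal I -> nonzero_ideal J ->
  exists a b c : nat, [/\ has_index R I a, has_index R J b, has_index R (ideal_mul I J) c
        & (a * b <= c)%N].
Proof.
move=> HI HJ nI nJ.
have [A [C [a [b [c [[A0 C0 Aa] [IA IB1 spI te]]]]]]] := ideal_struct HI nI.
have [A' [C' [a' [b' [c' [[A0' C0' Aa'] [IA' IB1' spJ te']]]]]]] := ideal_struct HJ nJ.
have HIJ := mul_ideal HI HJ.
have [A2 [C2 [a2 [b2 [c2 [[A02 C02 Aa2] [IA2 IB2 sp2 te2]]]]]]] := ideal_struct HIJ (mul_nonzero nI nJ).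
exists (A * C)%N, (A' * C')%N, (A2 * C2)%N; split.
- exact: ideal_index IA IB1 spI.
- exact: ideal_index IA' IB1' spJ.
- exact: ideal_index IA2 IB2 sp2.
have [p [q [e1 s1]]] := prod_span HI HJ spI spJ IA2.
have [p' [q' [e2 s2]]] := prod_span HI HJ spI spJ IB2.
case: (emb_inj e1) => ep eq; case: (emb_inj e2) => ep' eq'.
pose D := (a * C%:Z * C%:Z) * (a' * C'%:Z * C'%:Z).
have [W hW] : exists W, p * q' - q * p' = W * D.
  apply: (span4_det (w12 := a) (w13 := a') (w14 := b + b' + s) (w23 := b' - b)
    (w24 := c') (w34 := c) _ _ _ _ _ _ s1 s2); rewrite /D ?Aa ?Aa'.
  + ring.
  + ring.
  + ring.
  + ring.
  + rewrite te'; ring.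
  + rewrite te; ring.
rewrite -ep -eq -ep' -eq' in hW.
have DE : D = ((A * C) * (A' * C'))%N :> int.
  by rewrite /D !PoszM Aa Aa'; ring.
rewrite DE in hW.
move: hW; rewrite mul0r subr0 -PoszM => hW.
have Y0 : (0 < A2 * C2)%N by rewrite muln_gt0 A02 C02.
have X0 : (0 < A * C * (A' * C'))%N by rewrite !muln_gt0 A0 C0 A0' C0'.
move: Y0 X0 hW; move: (A * C * (A' * C'))%N (A2 * C2)%N => X Y Y0 X0 hW.
have W0 : 0 < W by nia.
nia.
Qed.
End Core.


Lemma common_den (l : seq rat) : exists d : nat, (0 < d)%N /\
  forall r, r \in l -> exists z : int, r * d%:R = z%:~R.
Proof.
elim: l => [|r l [d [d0 Hd]]]; first by exists 1%N.
have [n hn] : exists n : nat, denq r = n%:Z by exists `|denq r|%N; have := denq_gt0 r; lia.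
have n0 : (0 < n)%N by have := denq_gt0 r; lia.
exists (d * n)%N; split; first by rewrite muln_gt0 d0 n0.
move=> r'; rewrite inE => /orP [/eqP ->| /Hd [z hz]].
  exists (numq r * d%:Z); rewrite intrM numqE hn natrM; ring.
by exists (z * n%:Z); rewrite natrM intrM -hz; ring.
Qed.

Section Lay1.
Variable L : fieldExtType rat.
Variable R : L -> Prop.
Hypothesis dim2 : \dim {:L} = 2%N.
Hypothesis ord : is_order R.

Local Notation iq := (in_alg L).

Lemma R1 : R 1. Proof. by case: ord => [[]]. Qed.
Lemma RB x y : R x -> R y -> R (x - y). Proof. by case: ord => [[_ H _]] _ _; apply: H. Qed.
Lemma RM x y : R x -> R y -> R (x * y). Proof. by case: ord => [[_ _ H]] _ _; apply: H. Qed.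
Lemma R0' : R 0. Proof. by rewrite -(subrr 1); apply: RB; apply: R1. Qed.
Lemma RN x : R x -> R (- x). Proof. by move=> h; rewrite -sub0r; apply: RB => //; apply: R0'. Qed.
Lemma RD x y : R x -> R y -> R (x + y).
Proof. by move=> h1 h2; rewrite -(opprK y); apply: RB => //; apply: RN. Qed.
Lemma Rint (z : int) : R z%:~R.
Proof.
have Rn : forall n : nat, R n%:R.
  by elim=> [|n IH]; [apply: R0' | rewrite mulrSr; apply: RD => //; apply: R1].
case: z => n; first exact: Rn.
by rewrite NegzE intrN; apply: RN; apply: Rn.
Qed.

Lemma ex_theta : exists th, R th /\ th \notin <[1]>%VS.
Proof.
case: (classic (exists th, R th /\ th \notin <[1]>%VS)) => // H.
have Rin : forall x, R x -> x \in <[1]>%VS.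
  by move=> x Rx; apply/negPn/negP => hx; apply: H; exists x.
have [x0 hx0] : exists x0 : L, x0 \notin <[1]>%VS.
  apply: NNPP => H2.
  have : ({:L} <= <[1]>)%VS.
    by apply/subvP => x _; apply/negPn/negP => hx; apply: H2; exists x.
  by move/dimvS; rewrite dim_vline oner_eq0 dim2.
case: ord => _ _ Hfrac.
have [a [b [Ra Rb b0 e]]] := Hfrac x0.
have /vlineP [al ea] := Rin a Ra.
have /vlineP [be eb] := Rin b Rb.
case/negP: hx0; rewrite e ea eb; apply/vlineP; exists (al / be).
by rewrite -!/(in_alg L _) fmorph_div.
Qed.

Section Theta.
Variable th : L.
Hypothesis hth : th \notin <[1]>%VS.

Definition cp (p q : rat) : L := iq p + iq q * th.

Lemma decomp x : exists p q : rat, x = cp p q.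
Proof.
have fr : free [:: th; 1] by rewrite free_cons seq1_free oner_eq0 andbT span_seq1.
have : <<[:: th; 1%R]>>%VS = fullv.
  apply/eqP; rewrite eqEdim subvf /=; move: fr; rewrite /free => /eqP ->.
  by rewrite dim2.
move=> E; have := memvf x; rewrite -E span_cons span_seq1.
move=> /memv_addP [u /vlineP [q ->] [v /vlineP [p ->] ->]].
by exists p, q; rewrite /cp addrC mulr_algl.
Qed.

Lemma cp_inj p q p' q' : cp p q = cp p' q' -> p = p' /\ q = q'.
Proof.
rewrite /cp => E.
have qq : q = q'.
  apply/eqP; apply/negPn/negP => nq; case/negP: hth.
  have nq' : q - q' != 0 by rewrite subr_eq0.
  have E2 : iq (q - q') * th = iq (p' - p).
    apply/eqP; rewrite -subr_eq0; apply/eqP.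
    have -> : iq (q - q') * th - iq (p' - p) = (iq p + iq q * th) - (iq p' + iq q' * th) by ring.
    by rewrite E subrr.
  have -> : th = iq ((q - q')^-1) * (iq (q - q') * th).
    by rewrite mulrA -rmorphM mulVf // rmorph1 mul1r.
  by rewrite E2 -rmorphM; apply/vlineP; eexists.
split=> //; move: E; rewrite qq => /addIr; apply: fmorph_inj.
Qed.

Lemma cp_int_inj (u v u' v' : int) : cp u%:~R v%:~R = cp u'%:~R v'%:~R -> u = u' /\ v = v'.
Proof. by move=> /cp_inj [/intr_inj h1 /intr_inj h2]. Qed.

End Theta.

Lemma order_basis : exists (w : L) (s t : int), [/\ w ^+ 2 = s%:~R * w + t%:~R,
     (forall u v : int, u%:~R + v%:~R * w = 0 :> L -> u = 0 /\ v = 0) &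
     (forall x, R x <-> exists u v : int, x = u%:~R + v%:~R * w)].
Proof.
have [th [Rth hth]] := ex_theta.
have ord' := ord; case: ord' => _ [n [g [Rg Hg]]] _.
have [pq hpq] : exists pq : 'I_n -> rat * rat, forall i, g i = cp th (pq i).1 (pq i).2.
  apply: (@fin_all_exists _ (fun _ => (rat * rat)%type) (fun i pq => g i = cp th pq.1 pq.2)) => i; have [p [q e]] := decomp hth (g i); by exists (p, q).
have [d [d0 Hd]] := common_den ([seq (pq i).1 | i <- enum 'I_n] ++ [seq (pq i).2 | i <- enum 'I_n]).
pose D : rat := d%:R.
have D0 : D != 0 by rewrite /D pnatr_eq0 -lt0n.
have hp : forall i, exists z : int, (pq i).1 * D = z%:~R.
  by move=> i; apply: Hd; rewrite mem_cat; apply/orP; left; apply: map_f; rewrite mem_enum.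
have hq : forall i, exists z : int, (pq i).2 * D = z%:~R.
  by move=> i; apply: Hd; rewrite mem_cat; apply/orP; right; apply: map_f; rewrite mem_enum.
pose Pd (y : L) := exists u v : int, y = cp th u%:~R v%:~R.
have Pdx : forall x, R x -> Pd (iq D * x).
  move=> x /Hg [c ->]; rewrite mulr_sumr.
  apply: (big_ind Pd).
  - by exists 0, 0; rewrite /cp; ring.
  - move=> y1 y2 [u1 [v1 ->]] [u2 [v2 ->]]; exists (u1 + u2), (v1 + v2); rewrite /cp !intrD; ring.
  - move=> i _; have [zp ep] := hp i; have [zq eq] := hq i.
    by exists (zp * c i), (zq * c i); rewrite hpq -mulrzr /cp !intrM -ep -eq; ring.
have dZ0 : d%:Z != 0 by lia.
pose PV v := exists x u, R x /\ iq D * x = cp th u%:~R v%:~R.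
have PVsub : forall a b, PV a -> PV b -> PV (a - b).
  move=> a b [x [u [Rx ex]]] [y [u' [Ry ey]]]; exists (x - y), (u - u'); split; first exact: RB.
  by rewrite mulrBr ex ey /cp !intrB; ring.
have PVd : PV d%:Z by exists th, 0; split => //; rewrite /cp /D; ring.
have [v0 [v00 [w0 [u0 [Rw0 ew0]]] Vgen]] := @int_subgroup_gen _ PVsub _ PVd dZ0.
pose PU u := exists x, R x /\ iq D * x = cp th u%:~R 0.
have PUsub : forall a b, PU a -> PU b -> PU (a - b).
  move=> a b [x [Rx ex]] [y [Ry ey]]; exists (x - y); split; first exact: RB.
  by rewrite mulrBr ex ey /cp !intrB; ring.
have PUd : PU d%:Z by exists 1; split; [exact: R1 | rewrite /cp /D; ring].
have [m0 [m00 [x1 [Rx1 ex1]] Ugen]] := @int_subgroup_gen _ PUsub _ PUd dZ0.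
have [k ek] := Ugen _ PUd.
have k1 : k = 1.
  have kpos : 0 < k by nia.
  apply/eqP; apply/negPn/negP => kn1.
  have k2 : 2 <= k by lia.
  have kQ0 : (k%:~R : rat) != 0 by rewrite intr_eq0; lia.
  have Dk : D = k%:~R * m0%:R by rewrite /D -[d%:R]/((d%:Z)%:~R) ek intrM.
  have x1e : x1 = iq (k%:~R^-1).
    apply: (mulfI (x := iq D)); first by rewrite fmorph_eq0.
    rewrite ex1 /cp -rmorphM Dk mulrAC mulfV // mul1r rmorph0 mul0r addr0.
    by [].
  have Rpow : forall m, R (x1 ^+ m).
    by elim=> [|m IH]; [rewrite expr0; apply: R1 | rewrite exprS; apply: RM].
  have [u [v euv]] := Pdx _ (Rpow d).
  have E2 : cp th (D * (k%:~R^-1)^+d) 0 = cp th u%:~R v%:~R.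
    by rewrite -euv x1e /cp rmorph0 mul0r addr0 rmorphM rmorphXn.
  have [eu _] := cp_inj hth E2.
  have : (d%:Z)%:~R = (u * k ^+ d)%:~R :> rat.
    rewrite intrM -eu /D exprVn rmorphXn divfK //.
    by rewrite expf_neq0.
  move/intr_inj => hu.
  have big : forall m : nat, m%:Z < k ^+ m.
    elim=> [|m IH]; first by rewrite expr0.
    rewrite exprS; nia.
  have := big d; move: hu; move: (k ^+ d) => K hu hK.
  have Kp : 0 < K by lia.
  have : 1 <= u by nia.
  nia.
have Ugen' : forall u, PU u -> exists q, u = q * d%:Z.
  by move=> u /Ugen [q ->]; exists q; rewrite ek k1 mul1r.
have Rchar : forall x, R x <-> exists a b : int, x = a%:~R + b%:~R * w0.
  move=> x; split; last first.
    by move=> [a [b ->]]; apply: RD; [apply: Rint | apply: RM => //; apply: Rint].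
  move=> Rx; have [u [v ev]] := Pdx x Rx.
  have PVv : PV v by exists x, u.
  have [b eb] := Vgen v PVv.
  have Ry : R (x - b%:~R * w0) by apply: RB => //; apply: RM => //; apply: Rint.
  have ey : iq D * (x - b%:~R * w0) = cp th (u - b * u0)%:~R 0.
    rewrite mulrBr ev mulrCA ew0 eb /cp !intrB !intrM; ring.
  have [a ea] := Ugen' _ (ex_intro _ _ (conj Ry ey)).
  have Hy : x - b%:~R * w0 = a%:~R.
    apply: (mulfI (x := iq D)); first by rewrite fmorph_eq0.
    rewrite ey ea /cp /D; ring.
  by exists a, b; rewrite -Hy subrK.
have [t [s ets]] := (Rchar (w0 ^+ 2)).1 ltac:(by rewrite expr2; apply: RM).
exists w0, s, t; split => //; first by rewrite ets addrC.
move=> u v euv.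
have : iq D * (u%:~R + v%:~R * w0) = cp th (u * d%:Z + v * u0)%:~R (v * v0)%:~R.
  by rewrite mulrDr mulrCA ew0 /cp !intrD !intrM; ring.
rewrite euv mulr0.
have -> : (0 : L) = cp th 0%:~R 0%:~R by rewrite /cp; ring.
move=> /esym /(cp_int_inj hth) [h1 h2].
have v0' : v = 0 by nia.
split => //; rewrite v0' in h1; nia.
Qed.
End Lay1.

Unset Implicit Arguments. Set Strict Implicit.

Theorem theorem3p3 (L : fieldExtType rat) (R : L -> Prop) :
  \dim {:L} = 2%N -> is_order R ->
  forall I J : L -> Prop,
    is_ideal R I -> is_ideal R J -> nonzero_ideal I -> nonzero_ideal J ->
    exists a b c : nat,
      [/\ has_index R I a, has_index R J b, has_index R (ideal_mul I J) c
        & (a * b <= c)%N].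
Proof.
move=> dim2 ord I J HI HJ nI nJ.
have [w [s [t [w2 indep HR]]]] := order_basis dim2 ord.
exact: (core_main w2 indep HR HI HJ nI nJ).
Qed.
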